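(* Every graph $G$ satisfies $\mathrm{cop}(G)\le \mathrm{circ}(G)/2$, where $\mathrm{circ}(G)$ is the circumference of $G$.
   Context: All graphs are finite, undirected, without loops or multiple edges. The circumference $\mathrm{circ}(G)$ of a graph is the length of its longest cycle, or $+\infty$ if it has no cycle. Cops and Robber game on a connected graph: for an integer $k\ge 1$, the cop player places $k$ cops on (not necessarily distinct) vertices, then the robber is placed on a vertex; then, starting with the cops, the players alternate moves. In a cop move, each cop either stays or moves to an adjacent vertex; in a robber move, the robber stays or moves to an adjacent vertex. The cops win if at some point a cop and the robber occupy the same vertex. Both players have complete information. The cop number $\mathrm{cop}(G)$ of a connected graph $G$ is the smallest $k$ such that the cops have a winning strategy with $k$ cops; for a non-connected graph it is the maximum cop number of its connected components. *)

(* Defs.v *)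
From mathcomp Require Import all_boot.
From Stdlib Require Import ClassicalEpsilon.
Set Implicit Arguments. Unset Strict Implicit. Unset Printing Implicit Defensive.

Section Graphs.
Variable T : finType.
Variable e : rel T. (* simple graph: assumed symmetric and irreflexive *)

Definition has_cycle_of_length (n : nat) : Prop :=
  exists c : seq T, [/\ size c = n, 3 <= n, uniq c & cycle e c].

(* n is the circumference: the length of a longest cycle (only meaningful
   when G has a cycle; otherwise circ(G) = +oo and no n qualifies). *)
Definition is_circumference (n : nat) : Prop :=
  has_cycle_of_length n /\ (forall m, has_cycle_of_length m -> m <= n).

(* Cops and Robber with k cops.  cops_force C r : it is the cops' turn,
   cops are at positions C, robber at r, and the cops can force a capture
   in finitely many moves (whatever the robber does). *)
Inductive cops_force (k : nat) : {ffun 'I_k -> T} -> T -> Prop :=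
| cf_capture (C : {ffun 'I_k -> T}) (r : T) : (exists i, C i = r) -> cops_force C r
| cf_move (C : {ffun 'I_k -> T}) (r : T) (C' : {ffun 'I_k -> T}) :
    (forall i, C' i = C i \/ e (C i) (C' i)) ->
    ((exists i, C' i = r) \/
     (forall r' : T, r' = r \/ e r r' -> cops_force C' r')) ->
    cops_force C r.

Definition cops_win (S : {set T}) (k : nat) : Prop :=
  exists C : {ffun 'I_k -> T}, (forall i, C i \in S) /\
    (forall r, r \in S -> cops_force C r).

Definition component (x : T) : {set T} := [set y | connect e x y].

Definition is_least_win (S : {set T}) (k : nat) : Prop :=
  1 <= k /\ cops_win S k /\ (forall j, 1 <= j -> cops_win S j -> k <= j).

Definition cop_number_conn (S : {set T}) : nat :=
  epsilon (inhabits 0%N) (is_least_win S).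

(* cop number of G: maximum over connected components (0 for the empty graph) *)
Definition cop_number : nat := \max_(x : T) cop_number_conn (component x).

End Graphs.

(* Main.v *)
Require Import Defs.
From mathcomp Require Import all_boot zify.
From Stdlib Require Import ClassicalEpsilon.
Set Implicit Arguments. Unset Strict Implicit.

Section Main.
Variable T : finType.
Variable e : rel T.
Hypothesis e_sym : symmetric e.
Variable n : nat.
Hypothesis n3 : 2 < n.
Hypothesis hcyc : forall m, has_cycle_of_length e m -> m <= n.

Definition avoid (s : seq T) : rel T := [rel a b | [&& e a b, a \notin s & b \notin s]].

Lemma path_avoid_notin s x p : path (avoid s) x p -> all (fun z => z \notin s) p.
Proof.
elim: p x => //= y p IH x /andP[/and3P[_ _ ys] /IH ->]; by rewrite ys.
Qed.

Lemma sorted_catr (s1 s2 : seq T) : sorted e (s1 ++ s2) -> sorted e s2.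
Proof.
case: s1 => //= x s1; rewrite cat_path => /andP[_]; exact: path_sorted.
Qed.

Lemma cyc_bound Q v x j : uniq (rcons Q v) -> sorted e (rcons Q v) ->
  connect (avoid Q) v x -> j < size Q -> e x (nth v Q j) -> size Q - j < n.
Proof.
move=> uQ sQ /connectP [p pp ->] jQ exy.
case: (shortenP pp) => p' pp' up' _ {pp} in exy *.
have pe : path e v p'.
  by apply: sub_path pp' => a b /and3P[].
have nQ := path_avoid_notin pp'.
set y := nth v Q j in exy.
set D := drop j.+1 Q.
have eQ : Q = take j Q ++ y :: D by rewrite /y /D -drop_nth // cat_take_drop.
set c := y :: (D ++ v :: p').
have cyc : cycle e c.
  rewrite /c /= rcons_path cat_path /= pe last_cat /= exy !andbT.
  have : sorted e (y :: rcons D v).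
    apply: (@sorted_catr (take j Q)); by rewrite -rcons_cons -rcons_cat -eQ.
  by rewrite /= rcons_path.
have uc : uniq c.
  have -> : c = rcons (drop j Q) v ++ p' by rewrite (drop_nth v jQ) rcons_cons cat_cons cat_rcons.
  rewrite cat_uniq -drop_rcons; last exact: ltnW.
  rewrite drop_uniq; last exact: uQ.
  move: up' => /= /andP[vp' -> ] /=; rewrite andbT.
  apply/hasPn => z zp'; apply/negP => /mem_drop.
  rewrite mem_rcons inE => /orP[/eqP zv|zQ].
    by move: vp'; rewrite -zv zp'.
  by move/allP: nQ => /(_ z zp'); rewrite zQ.
have sc : size c = (size Q - j).+1 + size p'.
  rewrite /c /= size_cat /= /D size_drop.
  move: jQ; move: (size Q) (size p') => a b; lia.
case: (leqP 3 (size c)) => h3.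
  have := hcyc (ex_intro _ c (And4 (erefl _) h3 uc cyc)).
  rewrite sc; move: jQ; move: (size Q) (size p') => a b; lia.
move: h3; rewrite sc; move: jQ n3; move: (size Q) (size p') => a b; lia.
Qed.

Definition k := n %/ 2.
Lemma k_gt0 : 0 < k.
Proof. rewrite /k divn_gt0 //; exact: ltnW. Qed.

Definition pos (P : seq T) (v : T) (i : nat) : T := nth v (rcons P v) (size P - (3*i).+1).
Definition copsAt P v : {ffun 'I_k -> T} := [ffun i : 'I_k => pos P v i].

Lemma capture_adj (C : {ffun 'I_k -> T}) r (i : 'I_k) :
  C i = r \/ e (C i) r -> cops_force e C r.
Proof.
case=> [h|h]; first by apply: cf_capture; exists i.
apply: (@cf_move _ _ _ _ _ [ffun l => if l == i then r else C l]).
- by move=> l; rewrite ffunE; case: eqP => [->|_]; [right|left].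
- by left; exists i; rewrite ffunE eqxx.
Qed.

Lemma avoid_notin s a b : connect (avoid s) a b -> a \notin s -> b \notin s.
Proof.
move=> /connectP [p pp ->] an.
have := mem_last a p; rewrite inE => /orP[/eqP -> //|].
by move/allP: (path_avoid_notin pp) => H /H.
Qed.

Lemma path_lift P v x p : path (avoid P) x p -> v \notin x :: p ->
  path (avoid (rcons P v)) x p.
Proof.
elim: p x => //= y p IH x /andP[/and3P[exy xP yP] pp].
rewrite !inE negb_or => /andP[vx]; rewrite negb_or => /andP[vy vp].
rewrite IH ?inE ?negb_or ?vy ?vp // andbT /avoid /= exy !mem_rcons !inE !negb_or.
by rewrite (negbTE xP) (negbTE yP) eq_sym vx eq_sym vy.
Qed.

Lemma sorted_rcons2 s x y : sorted e (rcons s x) -> e x y -> sorted e (rcons (rcons s x) y).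
Proof.
case: s => [|a s] /=; first by rewrite andbT.
by move=> h exy; rewrite rcons_path h last_rcons.
Qed.

Lemma nthF (Q : seq T) w v j : j < size Q -> nth w (rcons Q w) j = nth v Q j.
Proof. by move=> h; rewrite nth_rcons h; apply: set_nth_default. Qed.

Lemma arith (N t j : nat) : 2 < N -> j < t.+1 -> t.+1 - j < N ->
  let i := (t - j).+1 %/ 3 in
  i < N %/ 2 /\ (t - 3 * i = j \/ t - 3 * i = j.+1 \/ (t - 3 * i).+1 = j).
Proof. move=> h1 h2 h3 /=; lia. Qed.

Lemma main m : forall P v r, #|T| <= size P + m -> uniq (rcons P v) ->
  sorted e (rcons P v) -> connect (avoid P) v r -> cops_force e (copsAt P v) r.
Proof.
elim: m => [|m IH] P v r hm uP sP cr.
  have := max_card (mem (rcons P v)).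
  by rewrite (card_uniqP uP) size_rcons; move: hm; rewrite addn0 => h1 h2;
     have := leq_trans h2 h1; rewrite ltnn.
case: (eqVneq r v) => [->|rv].
  apply: (@capture_adj _ _ (Ordinal k_gt0)); rewrite ffunE /pos /= muln0.
  case hP: (size P) => [|t].
    by left; move/size0nil: hP => ->.
  right; move/(sortedP v): sP => /(_ t); rewrite size_rcons hP => /(_ (ltnSn _)).
  by rewrite subSS subn0 nth_rcons hP ltnSn nth_rcons hP ltnn eqxx.
have [p pp rE] := connectP cr.
case: (shortenP pp) rE => p' pp' up' _ rE.
case: p' pp' up' rE => [_ _ rE|w p'']; first by rewrite rE eqxx in rv.
rewrite /= => /andP[/and3P[evw vP wP] pw] /andP[vn _] rE.
have vn' := vn; move: vn'; rewrite inE negb_or => /andP[vw _].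
set Q := rcons P v.
have wQ : w \notin Q by rewrite mem_rcons inE negb_or wP andbT eq_sym.
have cw : connect (avoid Q) w r.
  by apply/connectP; exists p''; [exact: path_lift | exact: rE].
have uQw : uniq (rcons Q w) by rewrite rcons_uniq wQ uP.
have sQw : sorted e (rcons Q w) := sorted_rcons2 sP evw.
have hm' : #|T| <= size Q + m by rewrite size_rcons addSnnS.
have rQ : r \notin Q := avoid_notin cw wQ.
apply: (@cf_move _ _ _ _ _ (copsAt Q w)).
  move=> i; rewrite !ffunE /pos /Q size_rcons subSS.
  case: (ltnP (3*i) (size P)) => hi.
    right; have := (sortedP v sP (size P - (3*i).+1)).
    rewrite size_rcons ltnS subnSK // => /(_ (leq_subr _ _)).
    by rewrite (nthF w v) // size_rcons ltnS leq_subr.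
  left; move: (hi); rewrite -subn_eq0 => /eqP ->.
  have -> : size P - (3 * i).+1 = 0 by apply/eqP; rewrite subn_eq0; exact: leqW.
  by rewrite (nthF w v) // size_rcons.
right => r' hr'.
case: (boolP (r' \in Q)) => r'Q.
  have err' : e r r'.
    by case: hr' => [E|//]; rewrite E in r'Q; rewrite r'Q in rQ.
  have jQ : index r' Q < size Q by rewrite index_mem.
  have r'E : nth w Q (index r' Q) = r' by rewrite nth_index.
  have hb := cyc_bound uQw sQw cw jQ (eq_ind_r (e r) err' r'E).
  rewrite -r'E -(nthF w w jQ).
  move: jQ hb r'E; rewrite /Q size_rcons => jQ hb r'E.
  have [iI ha] := arith n3 jQ hb.
  apply: (@capture_adj _ _ (Ordinal iI)); rewrite ffunE /pos /Q size_rcons subSS /=.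
  move: ha jQ; set a := size P - 3 * _; set j := index _ _ => ha jQ.
  move/(sortedP w): sQw; rewrite /Q !size_rcons => sQw.
  case: ha => [->|[->|aj]]; [by left | right | right].
    by rewrite e_sym; apply: sQw; rewrite ltnS.
  by rewrite -aj; apply: sQw; apply: leqW; rewrite aj.
apply: IH => //.
case: hr' => [->//|err'].
apply: connect_trans cw (connect1 _).
by rewrite /avoid /= err' rQ r'Q.
Qed.

End Main.

Lemma least_exists (Pr : nat -> Prop) N : forall k, k <= N -> Pr k ->
  exists m, Pr m /\ forall j, Pr j -> m <= j.
Proof.
elim: N => [|N IH] k hk Pk.
  by exists k; split => // j _; move: hk; rewrite leqn0 => /eqP ->.
case: (classic (exists j, j < k /\ Pr j)) => [[j [jk Pj]]|H].
  by apply: (IH j) => //; rewrite -ltnS; apply: leq_trans jk hk.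
exists k; split => // j Pj; case: (leqP k j) => // jk.
by exfalso; apply: H; exists j.
Qed.


Theorem corollary15 (T : finType) (e : rel T)
  (e_sym : symmetric e) (e_irr : irreflexive e) (n : nat) :
  is_circumference e n -> 2 * cop_number e <= n.
Proof.
move=> [[c [_ n3 _ _]] hmax].
have hk : cop_number e <= n %/ 2.
  apply/bigmax_leqP => x _.
  have cw : cops_win e (component e x) (k n).
    exists (copsAt n [::] x); split.
      by move=> i; rewrite ffunE /pos /= inE connect0.
    move=> r; rewrite inE => cr.
    apply: (main e_sym n3 hmax (m := #|T|)) => //.
    by rewrite (@eq_connect _ _ e) // => a b; rewrite /avoid /= !andbT.
  have [m [[m1 mw] mmin]] := @least_exists (fun j => 1 <= j /\ cops_win e (component e x) j) (k n) (k n)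
     (leqnn _) (conj (k_gt0 n3) cw).
  have := @epsilon_spec nat (inhabits 0) (is_least_win e (component e x)).
  move=> /(_ (ex_intro _ m (conj m1 (conj mw (fun j h1 h2 => mmin j (conj h1 h2)))))).
  rewrite /cop_number_conn => -[_ [_ H]].
  exact: H (k_gt0 n3) cw.
apply: leq_trans (leq_mul (leqnn 2) hk) _.
by rewrite mulnC leq_trunc_div.
Qed.
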